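(* Let $d\geq 2$ be even and $E,F\subset\mathbb F_q^d$ with $|E||F|\geq 16q^d$. Then $$(|E||F|-\nu(0))^2\geq \frac{|E|^2|F|^2}{36}$$ and $$q^{3d}\Big|\sum_{m\in S_0}\overline{\widehat E(m)}\widehat F(m)\Big|^2-\nu^2(0)\leq q^{-1}|E|^2|F|^2.$$
   Context: $\mathbb F_q$ is a finite field of characteristic greater than two, and $\chi$ is a fixed nontrivial additive character of $\mathbb F_q$. For $f:\mathbb F_q^d\to\mathbb C$, $\widehat f(m)=q^{-d}\sum_{x\in\mathbb F_q^d}\chi(-m\cdot x)f(x)$; sets are identified with their indicator functions. For $m\in\mathbb F_q^d$, $\|m\|=m_1^2+\dots+m_d^2$; $S_0=\{x\in\mathbb F_q^d:\|x\|=0\}$. $\nu(0)=|\{(x,y)\in E\times F:\|x-y\|=0\}|$. *)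

(* Defs.v *)
From HB Require Import structures.
From mathcomp Require Import all_boot all_order all_algebra all_field.
Set Implicit Arguments. Unset Strict Implicit. Unset Printing Implicit Defensive.
Import Order.TTheory GRing.Theory Num.Theory.
Local Open Scope ring_scope.

Definition dotv (K : finFieldType) (d : nat) (m x : 'rV[K]_d) : K :=
  \sum_(i < d) m 0 i * x 0 i.

Definition normv (K : finFieldType) (d : nat) (m : 'rV[K]_d) : K :=
  \sum_(i < d) m 0 i ^+ 2.

Definition S0 (K : finFieldType) (d : nat) : {set 'rV[K]_d} :=
  [set x | normv x == 0].

Definition indic (T : finType) (A : {set T}) (x : T) : algC := (x \in A)%:R.

Definition fourier (K : finFieldType) (d : nat) (chi : K -> algC)
  (f : 'rV[K]_d -> algC) (m : 'rV[K]_d) : algC :=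
  ((#|K|%:R : algC) ^+ d)^-1 * \sum_(x : 'rV[K]_d) chi (- dotv m x) * f x.

Definition nu0 (K : finFieldType) (d : nat) (E F : {set 'rV[K]_d}) : nat :=
  #|[set p : 'rV[K]_d * 'rV[K]_d |
      [&& p.1 \in E, p.2 \in F & normv (p.1 - p.2) == 0]]|.

(* Main.v *)
Require Import Defs.
From HB Require Import structures.
From mathcomp Require Import all_boot all_order all_algebra all_field.
From mathcomp Require Import ring lra zify.
Import Order.TTheory GRing.Theory Num.Theory.
Local Open Scope ring_scope.
Set Implicit Arguments. Unset Strict Implicit. Unset Printing Implicit Defensive.


Lemma sum_mul2 (I : finType) (u v : I -> algC) :
  \sum_i \sum_j u i * v j = (\sum_i u i) * (\sum_j v j).
Proof. by rewrite mulr_suml; apply: eq_bigr => i _; rewrite mulr_sumr. Qed.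

Lemma CS (I : finType) (a b : I -> algC) :
  (forall i, 0 <= a i) -> (forall i, 0 <= b i) ->
  (\sum_i a i * b i) ^+ 2 <= (\sum_i a i ^+ 2) * (\sum_i b i ^+ 2).
Proof.
move=> ha hb.
have H : 0 <= \sum_i \sum_j (a i * b j - a j * b i) ^+ 2.
  apply: sumr_ge0 => i _; apply: sumr_ge0 => j _; rewrite -realEsqr.
  by apply: rpredB; apply: rpredM; apply: ger0_real.
have E : \sum_i \sum_j (a i * b j - a j * b i) ^+ 2 =
   2%:R * ((\sum_i a i ^+ 2) * (\sum_i b i ^+ 2) - (\sum_i a i * b i) ^+ 2).
  transitivity (\sum_i \sum_j (a i ^+ 2 * b j ^+ 2 + b i ^+ 2 * a j ^+ 2
        - 2%:R * ((a i * b i) * (a j * b j)))).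
    by apply: eq_bigr => i _; apply: eq_bigr => j _; ring.
  under eq_bigr do rewrite sumrB big_split /=.
  rewrite sumrB big_split /= !sum_mul2.
  under [X in _ + _ - X]eq_bigr do rewrite -mulr_sumr.
  rewrite -mulr_sumr sum_mul2; ring.
move: H; rewrite E pmulr_rge0 ?ltr0n // subr_ge0 //.
Qed.

Lemma lin1 (I : finType) (A : {set I}) (a b : I -> algC) (al P q : algC) :
  \sum_(i in A) (al * a i + P * (q * b i - 1)) =
  al * \sum_(i in A) a i + P * (q * \sum_(i in A) b i - \sum_(i in A) 1).
Proof. by rewrite big_split /= -!mulr_sumr sumrB -mulr_sumr. Qed.

Lemma lin2 (I : finType) (A : {set I}) (a b c : I -> algC) (al P q : algC) :
  \sum_(i in A) (al * a i + P * (q * b i - c i)) =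
  al * \sum_(i in A) a i + P * (q * \sum_(i in A) b i - \sum_(i in A) c i).
Proof. by rewrite big_split /= -!mulr_sumr sumrB -mulr_sumr. Qed.

Section Chars.
Variable K : finFieldType.
Variable chi : K -> algC.
Hypothesis hchi_add : forall x y : K, chi (x + y) = chi x * chi y.
Hypothesis hchi0 : chi 0 = 1.
Hypothesis hchi_nontriv : exists x : K, chi x != 1.

Local Notation q := (#|K|%:R : algC).

Lemma q_neq0 : q != 0.
Proof. by rewrite pnatr_eq0 -lt0n; apply/card_gt0P; exists 0. Qed.

Lemma q_gt0 : 0 < (#|K|%:R : algC).
Proof. by rewrite ltr0n; apply/card_gt0P; exists 0. Qed.

Lemma chi_sum (I : Type) (r : seq I) (P : pred I) (F : I -> K) :
  chi (\sum_(i <- r | P i) F i) = \prod_(i <- r | P i) chi (F i).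
Proof. exact: (big_morph chi hchi_add hchi0). Qed.

Lemma chiN_mul t : chi t * chi (- t) = 1.
Proof. by rewrite -hchi_add subrr hchi0. Qed.

Lemma chi_neq0 t : chi t != 0.
Proof. by apply/negP => /eqP h; have := chiN_mul t; rewrite h mul0r => /eqP; rewrite eq_sym oner_eq0. Qed.

Lemma chiMn t n : chi (t *+ n) = chi t ^+ n.
Proof. elim: n => [|n IH]; first by rewrite mulr0n expr0 hchi0. by rewrite mulrS hchi_add IH exprS. Qed.

Lemma norm_chi t : `|chi t| = 1.
Proof.
case: (finPcharP K) => p pr pc.
have : chi t ^+ p = 1 by rewrite -chiMn (mulrn_pchar pc) hchi0.
move=> /(congr1 (fun x => `|x|)); rewrite normrX normr1 => /eqP.
by rewrite pexpr_eq1 ?prime_gt0 // => /eqP.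
Qed.

Lemma conj_chi t : (chi t)^* = chi (- t).
Proof.
have h1 : (chi t)^* = (chi t)^-1 by rewrite invC_norm norm_chi expr1n invr1 mul1r.
rewrite h1; apply: (mulfI (chi_neq0 t)); by rewrite chiN_mul divff ?chi_neq0.
Qed.

Lemma sum_chi : \sum_(t : K) chi t = 0.
Proof.
case: hchi_nontriv => x0 hx0.
have E1 : \sum_(t : K) chi t = \sum_(t : K) chi (t + x0) := reindex_inj (addIr x0).
set S := \sum_t chi t.
have : S = S * chi x0.
  rewrite {1}/S E1 mulr_suml.
  by apply: eq_bigr => t _; rewrite hchi_add.
move/eqP; rewrite -subr_eq0 -{1}(mulr1 S) -mulrBr mulf_eq0 subr_eq0 (eq_sym 1) (negbTE hx0) orbF.
by move/eqP.
Qed.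

Lemma sum_chiM (a : K) : \sum_(t : K) chi (a * t) = q * (a == 0)%:R.
Proof.
have [->|a0] := eqVneq a 0.
  rewrite mulr1 (eq_bigr (fun _ => 1)) => [|t _]; last by rewrite mul0r hchi0.
  by rewrite sumr_const.
rewrite mulr0 -[RHS](sum_chi); symmetry; exact: (reindex_inj (mulfI a0)).
Qed.

Hypothesis h2 : (2%:R : K) != 0.

Lemma h4 : (4%:R : K) != 0.
Proof. by rewrite (_ : 4 = 2 * 2)%N // natrM mulf_neq0. Qed.

Definition G (s : K) : algC := \sum_(u : K) chi (s * u ^+ 2).

Lemma gauss_shift (s t : K) : s != 0 ->
  \sum_(u : K) chi (s * u ^+ 2 + u * t) = chi (t ^+ 2 * - (4%:R * s)^-1) * G s.
Proof.
move=> s0.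
pose c := - t / (2%:R * s).
have E1 : \sum_(u : K) chi (s * u ^+ 2 + u * t) = \sum_(u : K) chi (s * (u + c) ^+ 2 + (u + c) * t)
  := reindex_inj (addIr c).
rewrite E1 /G mulr_sumr; apply: eq_bigr => u _.
have -> : s * (u + c) ^+ 2 + (u + c) * t = t ^+ 2 * - (4%:R * s)^-1 + s * u ^+ 2.
  rewrite /c; field.
  by rewrite s0 h2 h4.
by rewrite hchi_add.
Qed.

Lemma sum_ind (g : K -> algC) : \sum_(v : K) g v * (v == 0)%:R = g 0.
Proof.
rewrite (bigD1 0) //= eqxx mulr1 big1 ?addr0 // => v /negbTE ->; by rewrite mulr0.
Qed.

Lemma gauss_conj (s : K) : (G s)^* = G (- s).
Proof.
rewrite /G rmorph_sum; apply: eq_bigr => u _; rewrite mulNr; exact: conj_chi.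
Qed.

Lemma gauss_norm (s : K) : s != 0 -> G s * G (- s) = #|K|%:R.
Proof.
move=> s0.
rewrite /G mulr_suml.
transitivity (\sum_(v : K) chi (- s * v ^+ 2) * \sum_(u : K) chi ((- (2%:R * s * v)) * u)).
  transitivity (\sum_(u : K) \sum_(v : K) chi (- s * v ^+ 2) * chi ((- (2%:R * s * v)) * u)).
    apply: eq_bigr => u _; rewrite mulr_sumr.
    have E1 : \sum_(v : K) chi (s * u ^+ 2) * chi (- s * v ^+ 2) =
       \sum_(v : K) chi (s * u ^+ 2) * chi (- s * (v + u) ^+ 2) := reindex_inj (addIr u).
    rewrite E1; apply: eq_bigr => v _; rewrite -!hchi_add; congr chi; ring.
  rewrite exchange_big; apply: eq_bigr => v _; by rewrite mulr_sumr.
under eq_bigr => v _ do rewrite sum_chiM.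
transitivity (\sum_(v : K) chi (- s * v ^+ 2) * #|K|%:R * (v == 0)%:R).
  by apply: eq_bigr => v _; rewrite mulrA oppr_eq0 !mulf_eq0 (negbTE h2) (negbTE s0).
rewrite sum_ind.
by rewrite expr0n /= mulr0 hchi0 mul1r.
Qed.

Lemma G0 : G 0 = #|K|%:R.
Proof.
rewrite /G (eq_bigr (fun _ => 1)) => [|u _]; last by rewrite mul0r hchi0.
by rewrite sumr_const.
Qed.

Lemma sum_const_q : \sum_(s : K) (#|K|%:R : algC) = #|K|%:R * #|K|%:R.
Proof. by rewrite sumr_const mulr_natr. Qed.

Lemma two_squares (k : K) : exists a b : K, a ^+ 2 + b ^+ 2 = k.
Proof.
case: (boolP [exists a, exists b, a ^+ 2 + b ^+ 2 == k]) => [/existsP [a /existsP [b /eqP h]]|nex].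
  by exists a, b.
exfalso.
have H0 : \sum_(s : K) chi (- k * s) * G s ^+ 2 = 0.
  rewrite (eq_bigr (fun s => \sum_(a : K) \sum_(b : K) chi ((a ^+ 2 + b ^+ 2 - k) * s))); last first.
    move=> s _; rewrite expr2 /G mulr_suml mulr_sumr; apply: eq_bigr => a _.
    rewrite mulr_sumr mulr_sumr; apply: eq_bigr => b _; rewrite -!hchi_add; congr chi; ring.
  rewrite exchange_big; apply: big1 => a _; rewrite exchange_big; apply: big1 => b _.
  rewrite (eq_bigr (fun s => chi ((a ^+ 2 + b ^+ 2 - k) * s))) // sum_chiM.
  case: eqP => [h|]; last by rewrite mulr0.
  by exfalso; move/negP: nex; apply; apply/existsP; exists a; apply/existsP; exists b; rewrite -subr_eq0 h.
move: H0; rewrite (bigD1 0) //= mulr0 hchi0 mul1r G0 => /eqP; rewrite addr_eq0 => /eqP H1.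
have : `|\sum_(s : K | s != 0) chi (- k * s) * G s ^+ 2| <= \sum_(s : K | s != 0) #|K|%:R.
  apply: le_trans (ler_norm_sum _ _ _) _; apply: ler_sum => s s0.
  rewrite normrM norm_chi mul1r normrX normCK gauss_conj gauss_norm //; exact: lexx.
have := sum_const_q; rewrite (bigD1 0) //= => /(canRL (addKr _)) ->.
rewrite -[X in `|X|]opprK -H1 normrN normrX ger0_norm ?ler0n // expr2 addrC lerBrDr gerDl.
by move=> h; have := lt_le_trans q_gt0 h; rewrite ltxx.
Qed.

Lemma gauss_scale (s a b : K) : a ^+ 2 + b ^+ 2 != 0 ->
  G (s * (a ^+ 2 + b ^+ 2)) ^+ 2 = G s ^+ 2.
Proof.
move=> k0; set k := a ^+ 2 + b ^+ 2.
have GE t : G t ^+ 2 = \sum_(p : K * K) chi (t * (p.1 ^+ 2 + p.2 ^+ 2)).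
  rewrite expr2 /G mulr_suml -(pair_bigA _ (fun u v => chi (t * (u ^+ 2 + v ^+ 2)))) /=; apply: eq_bigr => u _.
  rewrite mulr_sumr; apply: eq_bigr => v _; by rewrite -hchi_add mulrDr.
pose L (p : K * K) := (a * p.1 - b * p.2, b * p.1 + a * p.2).
pose Li (p : K * K) := ((a * p.1 + b * p.2) / k, (a * p.2 - b * p.1) / k).
have LK : cancel L Li.
  move=> [x y]; rewrite /L /Li /=; congr pair; rewrite /k; field; exact: k0.
rewrite !GE [RHS](reindex_inj (can_inj LK)); apply: eq_bigr => [[x y]] _ /=.
congr chi; rewrite /k; ring.
Qed.

Lemma gauss_sq_const (s : K) : s != 0 -> G s ^+ 2 = G 1 ^+ 2.
Proof.
move=> s0; have [a [b hab]] := two_squares s.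
by rewrite -(@gauss_scale 1 a b) ?hab // mul1r.
Qed.

Lemma gauss_p : G 1 ^+ 2 = #|K|%:R \/ G 1 ^+ 2 = - #|K|%:R.
Proof.
have o0 : (1 : K) != 0 := oner_neq0 K.
have H : G 1 ^+ 2 * G 1 ^+ 2 = #|K|%:R * #|K|%:R.
  rewrite -{2}(gauss_sq_const (s := -1)) ?oppr_eq0 //.
  by rewrite -exprMn gauss_norm // expr2.
move/eqP: H; rewrite -subr_eq0 (_ : _ - _ = (G 1 ^+ 2 - #|K|%:R) * (G 1 ^+ 2 + #|K|%:R)); last by ring.
rewrite mulf_eq0 subr_eq0 addr_eq0 => /orP [/eqP ->|/eqP ->]; by [left|right].
Qed.

Section Vec.
Variable d : nat.
Local Notation V := 'rV[K]_d.
Local Notation q := (#|K|%:R : algC).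

Lemma prod_sum (f : 'I_d -> K -> algC) :
  \sum_(m : V) \prod_i f i (m 0 i) = \prod_i \sum_(u : K) f i u.
Proof.
rewrite bigA_distr_bigA /=.
rewrite (reindex (fun g : {ffun 'I_d -> K} => \row_i g i)) /=.
  by apply: eq_bigr => g _; apply: eq_bigr => i _; rewrite mxE.
exists (fun m : V => [ffun i => m 0 i]) => [g _|m _].
  by apply/ffunP => i; rewrite ffunE mxE.
by apply/rowP => i; rewrite mxE ffunE.
Qed.

Lemma sum_quad (s : K) (z : V) :
  \sum_(m : V) chi (s * normv m + dotv m z) = \prod_i \sum_(u : K) chi (s * u ^+ 2 + u * z 0 i).
Proof.
rewrite -prod_sum; apply: eq_bigr => m _.
by rewrite /normv /dotv mulr_sumr -big_split /= chi_sum.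
Qed.

Lemma sum_dot (z : V) : \sum_(m : V) chi (dotv m z) = q ^+ d * (z == 0)%:R.
Proof.
rewrite (eq_bigr (fun m => chi (0 * normv m + dotv m z))); last by move=> m _; rewrite mul0r add0r.
rewrite sum_quad.
under eq_bigr do under eq_bigr do rewrite mul0r add0r mulrC.
under eq_bigr do rewrite sum_chiM.
have [->|nz] := eqVneq z 0.
  rewrite mulr1 (eq_bigr (fun _ => q)) => [|i _]; last by rewrite mxE eqxx mulr1.
  by rewrite prodr_const card_ord.
rewrite mulr0.
case: (pickP (fun i => z 0 i != 0)) => [i hi|h].
  by rewrite (bigD1 i) //= (negbTE hi) mulr0 mul0r.
exfalso; move/eqP: nz; apply; apply/rowP => i; rewrite mxE.
by have := h i => /= /negbFE /eqP.
Qed.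

Lemma prod_gauss (s : K) (z : V) : s != 0 ->
  \prod_i \sum_(u : K) chi (s * u ^+ 2 + u * z 0 i) = chi (normv z * - (4%:R * s)^-1) * G s ^+ d.
Proof.
move=> s0.
under eq_bigr do rewrite gauss_shift //.
rewrite big_split /= prodr_const card_ord -chi_sum /normv mulr_suml.
done.
Qed.

Lemma sum_inv (r : K) :
  \sum_(s : K | s != 0) chi (r * - (4%:R * s)^-1) = q * (r == 0)%:R - 1.
Proof.
rewrite (reindex_inj invr_inj) /=.
rewrite (eq_bigl (fun s => s != 0)); last by move=> s; rewrite /= invr_eq0.
rewrite (eq_bigr (fun s => chi ((- (r / 4%:R)) * s))); last first.
  by move=> s _; rewrite invfM invrK mulrN mulNr mulrA mulrAC.
have := sum_chiM (- (r / 4%:R)); rewrite (bigD1 0) //= mulr0 hchi0.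
move=> /(canRL (addKr _)) ->.
rewrite oppr_eq0 mulf_eq0 invr_eq0 (negbTE h4) orbF.
by rewrite addrC.
Qed.

Hypothesis hd : ~~ odd d.

Lemma Gpow (s : K) : s != 0 -> G s ^+ d = (G 1 ^+ 2) ^+ d./2.
Proof.
move=> s0; rewrite -{1}(odd_double_half d) (negbTE hd) add0n -mul2n exprM.
by rewrite gauss_sq_const.
Qed.

Definition W (z : V) := \sum_(m in S0 K d) chi (dotv m z).

Lemma W_eq (z : V) : W z =
  q^-1 * (q ^+ d * (z == 0)%:R + (G 1 ^+ 2) ^+ d./2 * (q * (normv z == 0)%:R - 1)).
Proof.
rewrite /W.
transitivity (\sum_(m : V) q^-1 * (\sum_(s : K) chi (normv m * s)) * chi (dotv m z)).
  rewrite big_mkcond /=; apply: eq_bigr => m _.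
  rewrite inE sum_chiM mulKf ?q_neq0 //.
  by case: (normv m == 0); rewrite ?mul1r ?mul0r.
transitivity (q^-1 * \sum_(s : K) \sum_(m : V) chi (s * normv m + dotv m z)).
  rewrite [in RHS]exchange_big /= mulr_sumr; apply: eq_bigr => m _.
  rewrite -mulrA mulr_suml; congr (_ * _); apply: eq_bigr => s _.
  by rewrite hchi_add (mulrC s).
congr (_ * _).
rewrite (bigD1 0) //=.
under eq_bigr do rewrite mul0r add0r.
rewrite sum_dot; congr (_ + _).
transitivity (\sum_(s : K | s != 0) chi (normv z * - (4%:R * s)^-1) * (G 1 ^+ 2) ^+ d./2).
  by apply: eq_bigr => s s0; rewrite sum_quad prod_gauss // Gpow.
by rewrite -mulr_suml sum_inv mulrC.
Qed.


Definition aS (A : {set V}) (m : V) : algC := \sum_(x in A) chi (dotv m x).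

Lemma dotvB (m x y : V) : dotv m (x - y) = dotv m x - dotv m y.
Proof. by rewrite /dotv -sumrB; apply: eq_bigr => i _; rewrite !mxE mulrBr. Qed.

Lemma aS_conj A m : (aS A m)^* = \sum_(x in A) chi (- dotv m x).
Proof. by rewrite rmorph_sum; apply: eq_bigr => x _; exact: conj_chi. Qed.

Lemma cross (P : pred V) (A B : {set V}) :
  \sum_(m | P m) aS A m * (aS B m)^* =
  \sum_(x in A) \sum_(y in B) \sum_(m | P m) chi (dotv m (x - y)).
Proof.
transitivity (\sum_(m | P m) \sum_(x in A) \sum_(y in B) chi (dotv m (x - y))).
  apply: eq_bigr => m _; rewrite aS_conj /aS mulr_suml; apply: eq_bigr => x _.
  by rewrite mulr_sumr; apply: eq_bigr => y _; rewrite -hchi_add dotvB.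
by rewrite exchange_big; apply: eq_bigr => x _; rewrite exchange_big.
Qed.

Lemma sum_eqI (A B : {set V}) :
  \sum_(x in A) \sum_(y in B) ((x - y == 0)%:R : algC) = #|A :&: B|%:R.
Proof.
transitivity (\sum_(x in A) ((x \in B)%:R : algC)).
  apply: eq_bigr => x _; case: (boolP (x \in B)) => xB.
    rewrite (bigD1 x) //= subrr eqxx big1 ?addr0 // => y /andP [_ yx].
    by rewrite subr_eq0 eq_sym (negbTE yx).
  apply: big1 => y yB; rewrite subr_eq0; case: eqP => // xy.
  by rewrite xy yB in xB.
rewrite (eq_bigr (fun x => if x \in B then 1 else 0)); last by move=> x _; case: (x \in B).
rewrite -big_mkcondr sumr_const; congr (_%:R); apply: eq_card => x.
by rewrite !inE.
Qed.

Lemma sum_nu (E F : {set V}) :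
  \sum_(x in E) \sum_(y in F) ((normv (x - y) == 0)%:R : algC) = (nu0 E F)%:R.
Proof.
rewrite pair_big /=.
rewrite (eq_bigr (fun p => if normv (p.1 - p.2) == 0 then 1 else 0)); last first.
  by move=> p _; case: (normv _ == 0).
rewrite -big_mkcondr sumr_const /nu0; congr (_%:R); apply: eq_card => p.
by rewrite !inE andbA.
Qed.

Lemma sum_one (E F : {set V}) :
  \sum_(x in E) \sum_(y in F) (1 : algC) = (#|E| * #|F|)%:R.
Proof.
under eq_bigr do rewrite sumr_const.
by rewrite sumr_const natrM mulrC mulr_natr.
Qed.

Lemma plancherel (A : {set V}) : \sum_(m : V) aS A m * (aS A m)^* = q ^+ d * #|A|%:R.
Proof.
rewrite (cross xpredT).
under eq_bigr do under eq_bigr do rewrite sum_dot.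
under eq_bigr do rewrite -mulr_sumr.
by rewrite -mulr_sumr sum_eqI setIid.
Qed.

Lemma SW_formula (E F : {set V}) :
  \sum_(m in S0 K d) aS E m * (aS F m)^* =
  q^-1 * (q ^+ d * #|E :&: F|%:R + (G 1 ^+ 2) ^+ d./2 * (q * (nu0 E F)%:R - (#|E| * #|F|)%:R)).
Proof.
rewrite (cross (fun m => m \in S0 K d)).
under eq_bigr do under eq_bigr do rewrite -/(W _) W_eq.
rewrite -sum_eqI -sum_nu -sum_one.
set P := (G 1 ^+ 2) ^+ d./2.
under eq_bigr do rewrite -mulr_sumr.
rewrite -mulr_sumr; congr (_ * _).
under eq_bigr do rewrite lin1.
by rewrite lin2.
Qed.

Lemma SW_bound (E F : {set V}) :
  `|\sum_(m in S0 K d) aS E m * (aS F m)^*| ^+ 2 <= (q ^+ d * #|E|%:R) * (q ^+ d * #|F|%:R).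
Proof.
have h1 : `|\sum_(m in S0 K d) aS E m * (aS F m)^*| <= \sum_(m : V) `|aS E m| * `|aS F m|.
  apply: le_trans (ler_norm_sum _ _ _) _.
  rewrite [X in _ <= X](bigID (fun m => m \in S0 K d)) /=.
  under eq_bigr do rewrite normrM norm_conjC.
  by rewrite lerDl; apply: sumr_ge0 => m _; rewrite mulr_ge0.
apply: (le_trans (y := (\sum_(m : V) `|aS E m| * `|aS F m|) ^+ 2)).
  by rewrite ler_pXn2r // ?nnegrE // sumr_ge0 // => m _; rewrite mulr_ge0.
apply: le_trans (CS _ _) _; [by move=> m| by move=> m|].
under eq_bigr do rewrite normCK.
under [X in _ * X <= _]eq_bigr do rewrite normCK.
by rewrite !plancherel.
Qed.

End Vec.
End Chars.

Lemma four_cI (c I X : int) : 0 <= c -> 0 <= I -> 16 * c ^+ 2 <= X -> I ^+ 2 <= X -> 4 * (c * I) <= X.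
Proof.
move=> c0 I0 h1 h2.
have h3 : 16 * (c * I) ^+ 2 <= X * X by rewrite exprMn mulrA; apply: ler_pM => //; nia.
nia.
Qed.

Lemma part2_int (Z c I q nu X eps : int) : (eps = 1 \/ eps = -1) ->
  0 <= c -> 0 <= I -> 0 <= nu -> 2 <= q -> 16 * c ^+ 2 <= X -> I ^+ 2 <= X ->
  Z = c * I + eps * (q * nu - X) -> Z ^+ 2 <= q ^+ 2 * nu ^+ 2 + q * X ^+ 2.
Proof.
move=> heps c0 I0 nu0 q2 h1 h2 ->.
have h4 : 4 * (c * I) <= X by apply: four_cI.
have a0 : 0 <= c * I by apply: mulr_ge0.
have X0 : 0 <= X by lia.
have Y0 : 0 <= q * nu by apply: mulr_ge0; lia.
move: (c * I) a0 h4 => a a0 h4.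
rewrite -subr_ge0.
have hq : 0 <= (q - 2) * X ^+ 2 by apply: mulr_ge0; [lia| apply: sqr_ge0].
case: heps => ->.
  have -> : q ^+ 2 * nu ^+ 2 + q * X ^+ 2 - (a + 1 * (q * nu - X)) ^+ 2 =
     (q - 2) * X ^+ 2 + (X - a) * (X + a) + 2 * a * X + 2 * (q * nu) * (X - a) by ring.
  by rewrite !addr_ge0 // ?mulr_ge0 //; lia.
have -> : q ^+ 2 * nu ^+ 2 + q * X ^+ 2 - (a + -1 * (q * nu - X)) ^+ 2 =
   (q - 2) * X ^+ 2 + ((X - 4 * a) * (X + 2 * a) + 7 * a ^+ 2) + 2 * a * (q * nu) + 2 * (q * nu) * X by ring.
by rewrite !addr_ge0 // ?mulr_ge0 // ?sqr_ge0 //; lia.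
Qed.

Lemma sqr_le_abs (u v : int) : 0 <= v -> u ^+ 2 <= v ^+ 2 -> - v <= u <= v.
Proof.
move=> v0 h; rewrite -ler_norml.
by rewrite -(ler_pXn2r (n:=2)) ?nnegrE ?normr_ge0 // real_normK ?num_real.
Qed.

Lemma t1 (Z a q nu X : int) : 4 * Z <= q * X -> - (q * X) <= 4 * Z -> 4 * a <= X -> 0 <= a ->
  Z = a + 1 * (q * nu - X) -> 4 * (q * nu) <= (q + 5) * X.
Proof. move=> h1 h2 h3 h4 hZ; rewrite hZ in h1 h2; rewrite [(q + 5) * X]mulrDl. move: (q * nu) (q * X) h1 h2 => Y QX. lia. Qed.

Lemma t2 (Z a q nu X : int) : 4 * Z <= q * X -> - (q * X) <= 4 * Z -> 4 * a <= X -> 0 <= a ->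
  Z = a + -1 * (q * nu - X) -> 4 * (q * nu) <= (q + 5) * X.
Proof. move=> h1 h2 h3 h4 hZ; rewrite hZ in h1 h2; rewrite [(q + 5) * X]mulrDl. move: (q * nu) (q * X) h1 h2 => Y QX. lia. Qed.

Lemma t3 (q nu X : int) : 3 <= q -> 0 <= X -> 4 * (q * nu) <= (q + 5) * X -> 3 * nu <= 2 * X.
Proof.
move=> q3 X0 h.
have hq : 0 <= (q - 3) * X by rewrite mulr_ge0 //; lia.
have : 0 <= q * (2 * X - 3 * nu).
  rewrite [(q + 5) * X]mulrDl in h; rewrite mulrBl in hq; rewrite mulrBr.
  rewrite (mulrCA q 2) (mulrCA q 3).
  move: (q * X) (q * nu) h hq => QX Y; lia.
by rewrite pmulr_rge0 ?subr_ge0 //; lia.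
Qed.

Lemma part1_int (Z c I q nu X eps : int) : (eps = 1 \/ eps = -1) ->
  0 < c -> 0 <= I -> 0 <= nu -> 3 <= q -> 16 * c ^+ 2 <= X -> I ^+ 2 <= X ->
  Z = c * I + eps * (q * nu - X) -> (c * Z) ^+ 2 <= q ^+ 2 * c ^+ 4 * X -> 3 * nu <= 2 * X.
Proof.
move=> heps c0 I0 nu0 q3 h1 h2 hZ hb.
have h4 : 4 * (c * I) <= X by apply: four_cI => //; apply: ltW.
have X0 : 0 <= X by apply: le_trans h1; rewrite mulr_ge0 // sqr_ge0.
have hb2 : Z ^+ 2 <= q ^+ 2 * c ^+ 2 * X.
  have : c ^+ 2 * Z ^+ 2 <= c ^+ 2 * (q ^+ 2 * c ^+ 2 * X).
    by rewrite -exprMn (_ : _ * (_ * _ * X) = q ^+ 2 * c ^+ 4 * X) //; ring.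
  by rewrite ler_pM2l // exprn_gt0.
have hb3 : (4 * Z) ^+ 2 <= (q * X) ^+ 2.
  have : 0 <= q ^+ 2 * X * (X - 16 * c ^+ 2) by rewrite mulr_ge0 ?subr_ge0 // mulr_ge0 // sqr_ge0.
  move=> hh; move: hb2; rewrite -subr_ge0 => hb2; rewrite -subr_ge0.
  have -> : (q * X) ^+ 2 - (4 * Z) ^+ 2 = 16 * (q ^+ 2 * c ^+ 2 * X - Z ^+ 2) + q ^+ 2 * X * (X - 16 * c ^+ 2) by ring.
  by rewrite addr_ge0 // mulr_ge0.
have q0 : 0 <= q by apply: le_trans q3.
have /andP [hZ2 hZ1] : - (q * X) <= 4 * Z <= q * X by apply: sqr_le_abs => //; apply: mulr_ge0.
have a0 : 0 <= c * I by rewrite mulr_ge0 // ltW.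
have hY : 4 * (q * nu) <= (q + 5) * X.
  by case: heps hZ => -> hZ; [exact: (@t1 Z (c * I) q nu X hZ1 hZ2 h4 a0 hZ) | exact: (@t2 Z (c * I) q nu X hZ1 hZ2 h4 a0 hZ)].
exact: (@t3 q nu X q3 X0 hY).
Qed.

Lemma fin1 (nu X : int) : 0 <= nu -> 3 * nu <= 2 * X -> X ^+ 2 <= (X - nu) ^+ 2 * 36.
Proof.
move=> nu0 h.
have X0 : 0 <= X by lia.
have h3 : X <= 3 * (X - nu) by lia.
have : X ^+ 2 <= (3 * (X - nu)) ^+ 2 by rewrite ler_pXn2r // nnegrE; lia.
move=> h4; apply: (le_trans h4); rewrite exprMn -subr_ge0.
have -> : (X - nu) ^+ 2 * 36 - 3 ^+ 2 * (X - nu) ^+ 2 = 27 * (X - nu) ^+ 2 by ring.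
by rewrite mulr_ge0 // sqr_ge0.
Qed.

Lemma intrXC (x : int) n : ((x ^+ n)%:~R : algC) = x%:~R ^+ n.
Proof. exact: rmorphXn. Qed.

Lemma intr_nat (n : nat) : ((n%:Z)%:~R : algC) = n%:R.
Proof. by []. Qed.

Unset Implicit Arguments.
Theorem mainTheorem10 (K : finFieldType) (chi : K -> algC)
  (hchar : 2%N \notin [pchar K])
  (hchi_add : forall x y : K, chi (x + y) = chi x * chi y)
  (hchi0 : chi 0 = 1)
  (hchi_nontriv : exists x : K, chi x != 1)
  (d : nat) (hd2 : (2 <= d)%N) (hdeven : ~~ odd d)
  (E F : {set 'rV[K]_d})
  (hEF : (16 * #|K| ^ d <= #|E| * #|F|)%N) :
  let q : algC := #|K|%:R in
  let cE : algC := #|E|%:R in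
  let cF : algC := #|F|%:R in
  let nu : algC := (nu0 E F)%:R in
  ((cE * cF) ^+ 2 / 36%:R <= (cE * cF - nu) ^+ 2)
  /\
  (q ^+ (3 * d) *
     `| \sum_(m in S0 K d) (fourier chi (indic E) m)^* * fourier chi (indic F) m | ^+ 2
   - nu ^+ 2
   <= q^-1 * (cE * cF) ^+ 2).
Proof.
cbv zeta.
have h2 : (2%:R : K) != 0.
  by apply: contra hchar => h; rewrite inE /= h.
have h1m : (1 : K) != -1.
  apply: contra h2 => /eqP h; by rewrite mulr2n addr_eq0 {1}h.
have q3 : (3 <= #|K|)%N.
  have := @uniq_leq_size _ [:: 0; 1; -1] (enum K).
  rewrite -cardT /=; apply => //; last by move=> x; rewrite mem_enum.
  rewrite !inE negb_or eq_sym oner_eq0 eq_sym oppr_eq0 oner_eq0 h1m.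
  done.
set k := d./2.
have hdk : d = (k * 2)%N by rewrite /k muln2 -{1}(odd_double_half d) (negbTE hdeven) add0n.
have qn0 : (#|K|%:R : algC) != 0 := q_neq0 K.
have qgt0 : (0 : algC) < #|K|%:R := q_gt0 K.
set SW := \sum_(m in S0 K d) aS chi E m * (aS chi F m)^*.
have HT : \sum_(m in S0 K d) (fourier chi (indic E) m)^* * fourier chi (indic F) m =
    ((#|K|%:R : algC) ^+ d)^-1 * ((#|K|%:R : algC) ^+ d)^-1 * SW.
  rewrite /SW mulr_sumr; apply: eq_bigr => m _.
  have hf : forall A : {set 'rV[K]_d}, fourier chi (indic A) m =
      ((#|K|%:R : algC) ^+ d)^-1 * (aS chi A m)^*.
    move=> A; rewrite /fourier (aS_conj hchi_add hchi0); congr (_ * _).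
    rewrite [RHS]big_mkcond; apply: eq_bigr => x _; rewrite /indic.
    by case: (x \in A); rewrite ?mulr1 ?mulr0.
  rewrite !hf rmorphM /= conjCK fmorphV /= rmorphXn /= conjC_nat.
  ring.
have [eps [heps hPk]] : exists eps : int, (eps = 1 \/ eps = -1) /\
    (G chi 1 ^+ 2) ^+ k = eps%:~R * (#|K|%:R : algC) ^+ k.
  case: (gauss_p hchi_add hchi0 hchi_nontriv h2) => ->.
    by exists 1; split; [left|rewrite mul1r].
  exists (if odd k then -1 else 1); split; first by case: (odd k); [right|left].
  rewrite exprNn -signr_odd; case: (odd k); by rewrite ?expr1 ?expr0 ?rmorphN1 ?rmorph1.
pose c : int := (#|K|%:Z) ^+ k.
pose I : int := #|E :&: F|%:Z.
pose qz : int := #|K|%:Z.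
pose nz : int := (nu0 E F)%:Z.
pose X : int := (#|E| * #|F|)%:Z.
pose Z : int := c * I + eps * (qz * nz - X).
have cR : (c%:~R : algC) = (#|K|%:R : algC) ^+ k by rewrite intrXC.
have hqd : (#|K|%:R : algC) ^+ d = ((#|K|%:R : algC) ^+ k) ^+ 2 by rewrite hdk exprM.
have HZ : SW = (#|K|%:R : algC)^-1 * ((c * Z)%:~R).
  rewrite /SW (SW_formula hchi_add hchi0 hchi_nontriv h2 hdeven) -/k hPk; congr (_ * _).
  rewrite /Z !(intrM, intrD, intrB) cR hqd.
  rewrite /X /qz /nz /I !intr_nat; ring.
have hb := SW_bound hchi_add hchi0 hchi_nontriv E F.
rewrite -/SW in hb.
have hSW2 : `|SW| ^+ 2 = (#|K|%:R : algC)^-2 * ((c * Z) ^+ 2)%:~R.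
  rewrite HZ normrM exprMn ger0_norm ?invr_ge0 ?ler0n // -intr_norm -rmorphXn.
  by rewrite real_normK ?num_real // expr2 -invfM -expr2.
have c0 : 0 < c by rewrite exprn_gt0 // ltz_nat; apply: leq_trans q3.
have I0 : 0 <= I by [].
have nu0' : 0 <= nz by [].
have X16 : 16 * c ^+ 2 <= X.
  have e1 : ((#|K| ^ d)%N : int) = (#|K| : int) ^+ d by rewrite -[LHS]natz natrX natz.
  have e2 : (#|K| : int) ^+ d = ((#|K| : int) ^+ k) ^+ 2 by rewrite {1}hdk exprM.
  move: hEF; rewrite -lez_nat PoszM e1 e2; exact.
have IX : I ^+ 2 <= X.
  rewrite /I /X expr2 -PoszM lez_nat; apply: leq_mul; apply: subset_leq_card.
    exact: subsetIl.
  exact: subsetIr.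
split.
  have hq3 : 3 <= qz by rewrite /qz lez_nat.
  have hbZ : (c * Z) ^+ 2 <= qz ^+ 2 * c ^+ 4 * X.
    have e : (((c * Z) ^+ 2)%:~R : algC) = (#|K|%:R : algC) ^+ 2 * `|SW| ^+ 2.
      by rewrite hSW2 mulrA mulfV ?expf_neq0 // mul1r.
    have e3 : ((qz ^+ 2 * c ^+ 4 * X)%:~R : algC) = (#|K|%:R : algC) ^+ 2 *
        ((#|K|%:R : algC) ^+ d * #|E|%:R * ((#|K|%:R : algC) ^+ d * #|F|%:R)).
      rewrite !intrM !intrXC /qz /X !intr_nat natrM hqd; ring.
    by rewrite -(ler_int algC) e e3 ler_pM2l ?exprn_gt0.
  have h3 : 3 * nz <= 2 * X by apply: (@part1_int Z c I qz nz X eps).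
  have := fin1 nu0' h3; rewrite -(ler_int algC) => h.
  have eX : (#|E|%:R * #|F|%:R : algC) = X%:~R by rewrite /X intr_nat natrM.
  rewrite eX -(intr_nat (nu0 E F)) -/nz -intrB -!intrXC ler_pdivrMr ?ltr0n //.
  by rewrite -(intr_nat 36) -intrM.
have hq2 : 2 <= qz by rewrite /qz lez_nat; apply: leq_trans q3.
have h := @part2_int Z c I qz nz X eps heps (ltW c0) I0 nu0' hq2 X16 IX (erefl _).
have h3d : (#|K|%:R : algC) ^+ (3 * d) = ((#|K|%:R : algC) ^+ k) ^+ 6.
  by rewrite -exprM; congr (_ ^+ _); rewrite hdk; lia.
have Qn0 : (#|K|%:R : algC) ^+ k != 0 by rewrite expf_neq0.
have nq : `|((#|K|%:R : algC) ^+ d)^-1| = ((#|K|%:R : algC) ^+ d)^-1 by rewrite ger0_norm // invr_ge0 exprn_ge0 // ler0n.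
rewrite HT !normrM !nq !exprMn hSW2.
have eL : (#|K|%:R : algC) ^+ (3 * d) * (((#|K|%:R : algC) ^+ d)^-1 ^+ 2 *
    ((#|K|%:R : algC) ^+ d)^-1 ^+ 2 * ((#|K|%:R : algC)^-2 * ((c * Z) ^+ 2)%:~R)) -
    (nu0 E F)%:R ^+ 2 = ((Z ^+ 2 - qz ^+ 2 * nz ^+ 2)%:~R) * ((#|K|%:R : algC) ^+ 2)^-1.
  rewrite intrB !intrM !intrXC /qz /nz !intr_nat h3d hqd.
  by field; rewrite Qn0 qn0.
have eR : (#|K|%:R : algC)^-1 * ((#|E|%:R : algC) ^+ 2 * (#|F|%:R : algC) ^+ 2) =
    ((qz * X ^+ 2)%:~R) * ((#|K|%:R : algC) ^+ 2)^-1.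
  rewrite intrM intrXC /qz /X !intr_nat natrM.
  by field; rewrite qn0.
rewrite eL eR ler_pM2r ?invr_gt0 ?exprn_gt0 // ler_int.
by rewrite lerBlDr addrC.
Qed.
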